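(* Let $k\geq 2$, let $0\leq r<1$ be real, and let $H$ be a $k$-hypertree with $|H|$ vertices and $e(H)$ edges. Then for every $k$-hypergraph $X$ with $n$ vertices and $n^{k-r}$ edges, $|\mathrm{Inj}(H,X)|=\Omega(n^{|H|-e(H)r})$ as $n\to\infty$, where the implicit constant depends only on $H$, $k$ and $r$.
   Context: A $k$-hypertree is a $k$-hypergraph built from a single edge by repeatedly adding an edge that meets the current hypergraph in exactly $k-1$ vertices all contained in one existing edge (so each new edge adds exactly one new vertex). $\mathrm{Inj}(H,X)$ is the set of injective maps $f$ from the vertices of $H$ to the vertices of $X$ such that the image of every edge of $H$ is an edge of $X$. *)

(* Defs.v *)
From mathcomp Require Import all_boot.
From Stdlib Require Import Reals.

Set Implicit Arguments.
Unset Strict Implicit.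
Unset Printing Implicit Defensive.

(* A k-hypergraph on a finite vertex type T is an edge set
   E : {set {set T}} all of whose edges have exactly k vertices. *)
Definition uniform (T : finType) (k : nat) (E : {set {set T}}) : Prop :=
  forall e, e \in E -> #|e| = k.

Inductive htree_on (T : finType) (k : nat) : {set T} -> {set {set T}} -> Prop :=
| htree_base (e : {set T}) :
    #|e| = k -> htree_on k e [set e]
| htree_step (S : {set T}) (E : {set {set T}}) (f g : {set T}) (v : T) :
    htree_on k S E -> f \in E -> g \subset f -> #|g| = k.-1 -> v \notin S ->
    htree_on k (v |: S) ((v |: g) |: E).

Definition is_hypertree (T : finType) (k : nat) (E : {set {set T}}) : Prop :=
  htree_on k [set: T] E.

Definition Inj (T V : finType) (EH : {set {set T}}) (EX : {set {set V}})
  : {set {ffun T -> V}} :=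
  [set f : {ffun T -> V} | injectiveb f && [forall e in EH, (f @: e) \in EX]].

(* Main.v *)
Require Import Defs.
From mathcomp Require Import all_boot.
From Stdlib Require Import Reals.
From mathcomp Require Import all_boot zify.
From Stdlib Require Import Lra.
From Stdlib Require ZArith.

Set Implicit Arguments.
Unset Strict Implicit.
Unset Printing Implicit Defensive.


Lemma bin_le_exp n m : 'C(n, m) <= n ^ m.
Proof.
elim: n m => [|n IH] [|m] //.
rewrite binS expnS.
have h1 := IH m.+1; have h2 := IH m.
have h3 : n ^ m <= n.+1 ^ m.
  case: m {h1 h2} => // m; by rewrite leq_exp2r.
rewrite expnS in h1.
nia.
Qed.

Lemma add1_set (T : finType) (A B : {set T}) :
  B \subset A -> #|A| = #|B|.+1 -> exists2 u, u \notin B & A = u |: B.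
Proof.
move=> sBA cA.
have : #|A :\: B| == 1.
  have := cardsID B A; rewrite (setIidPr sBA) cA => h; apply/eqP; lia.
case/cards1P => u hu.
have uAB : u \in A :\: B by rewrite hu set11.
move: (uAB); rewrite inE => /andP[uB uA].
exists u => //; apply/eqP; rewrite eqEsubset; apply/andP; split.
  apply/subsetP => x xA; rewrite in_setU1.
  case: (boolP (x \in B)) => xB; first by rewrite orbT.
  have : x \in A :\: B by rewrite inE xB xA.
  by rewrite hu in_set1 => ->.
by rewrite subUset sub1set uA sBA.
Qed.

Definition goodb (V : finType) (d : nat) (X : {set {set V}}) :=
  [forall a in X, forall y in a, d <= #|[set w | w |: (a :\ y) \in X]|].

Definition cov (V : finType) (X : {set {set V}}) : {set {set V}} :=
  [set a :\ y | a in X, y in a].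

Lemma deletion (V : finType) (k d : nat) : 0 < k ->
  forall X : {set {set V}}, uniform k X ->
  exists X' : {set {set V}}, [/\ X' \subset X, goodb d X' & #|X| <= #|X'| + d * #|cov X|].
Proof.
move=> k0 X; have [m] := ubnP #|cov X|; elim: m X => // m IH X ltm uX.
case: (boolP (goodb d X)) => [gX|].
  by exists X; split => //; rewrite leq_addr.
case/forallPn => a; rewrite negb_imply => /andP[aX /forallPn[y]].
rewrite negb_imply -ltnNge => /andP[ya lt].
set g := a :\ y in lt.
set B := [set b : {set V} | g \subset b].
set X1 := X :\: B.
have sub1 : X1 \subset X by apply: subsetDl.
have covlt : #|cov X1| < #|cov X|.
  apply: proper_card; rewrite properE; apply/andP; split.
    apply/subsetP => z /imset2P[b z' bX1 z'b ->]; apply/imset2P.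
    by exists b z' => //; apply: (subsetP sub1).
  apply/subsetPn; exists g; first by apply/imset2P; exists a y.
  apply/negP; case/imset2P => b z; rewrite inE => /andP[bB _] zb eq.
  by move: bB; rewrite inE eq subD1set.
have uX1 : uniform k X1 by move=> e eX; apply: uX; apply: (subsetP sub1).
have [X' [s' g' c']] := IH X1 (leq_trans covlt ltm) uX1.
exists X'; split => //; first exact: subset_trans s' sub1.
have cg : #|g| = k.-1.
  by move: (cardsD1 y a); rewrite ya (uX a aX) /= -/g => ->.
have cXB : #|X :&: B| <= #|[set w | w |: g \in X]|.
  apply: leq_trans (leq_imset_card (fun w => w |: g) _).
  apply: subset_leq_card; apply/subsetP => b; rewrite !inE => /andP[bX gb].
  have [u _ eb] : exists2 u, u \notin g & b = u |: g.
    by apply: add1_set => //; rewrite (uX b bX) cg prednK.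
  by apply/imsetP; exists u => //; rewrite inE -eb.
have := cardsID B X; rewrite -/X1 => hc.
have hm : d * #|cov X1| + d <= d * #|cov X| by rewrite addnC -mulnS leq_mul2l covlt orbT.
rewrite -hc; have h1 := leq_trans cXB (ltnW lt).
apply: leq_trans (leq_add h1 c') _; lia.
Qed.

Lemma htree_inv (T : finType) (k : nat) (S : {set T}) (E : {set {set T}}) : 0 < k -> htree_on k S E ->
  (forall e, e \in E -> e \subset S /\ #|e| = k) /\ #|S| + 1 = k + #|E|.
Proof.
move=> k0; elim => {S E} [e ce | S E f g v _ [IH1 IH2] fE gf cg vS].
  split; last by rewrite cards1 ce.
  by move=> e'; rewrite in_set1 => /eqP ->.
have [fS cf] := IH1 f fE.
have gS : g \subset S := subset_trans gf fS.
have vg : v \notin g by apply: contra vS; apply: (subsetP gS).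
have nE : v |: g \notin E.
  apply/negP => /IH1 [/subsetP h _]; by move: vS; rewrite h // setU11.
split.
  move=> e; rewrite in_setU1 => /orP[/eqP -> | eE].
    by rewrite setUSS ?sub1set ?set11 // cardsU1 vg cg add1n prednK.
  by have [eS ce] := IH1 e eE; split => //; apply: subset_trans eS (subsetUr _ _).
by rewrite cardsU1 vS cardsU1 nE; lia.
Qed.

Definition Fset (T V : finType) (v0 : V) (X : {set {set V}}) (S : {set T})
  (E : {set {set T}}) : {set {ffun T -> V}} :=
  [set f : {ffun T -> V} | [&& [forall x in S, forall y in S, (f x == f y) ==> (x == y)],
     [forall e in E, (f @: e) \in X] & [forall x, (x \notin S) ==> (f x == v0)]]].

Lemma base_count (T V : finType) (v0 : V) (k : nat) (X : {set {set V}}) (e : {set T}) :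
  uniform k X -> #|e| = k -> #|X| <= #|Fset v0 X e [set e]|.
Proof.
move=> uX ce.
apply: leq_trans (leq_imset_card (fun f : {ffun T -> V} => f @: e) _).
apply: subset_leq_card; apply/subsetP => a aX.
set sE := enum e; set sA := enum a.
have szE : size sE = k by rewrite -cardE.
have szA : size sA = k by rewrite -cardE uX.
pose f := [ffun x => if x \in e then nth v0 sA (index x sE) else v0].
have fe : f @: e = a.
  apply/eqP; rewrite eqEsubset; apply/andP; split.
    apply/subsetP => z /imsetP[x xe ->]; rewrite ffunE xe.
    rewrite -mem_enum -/sA mem_nth // szA -szE index_mem mem_enum //.
  apply/subsetP => y ya.
  have iy : index y sA < size sE by rewrite szE -szA index_mem mem_enum.
  have [x0 _] : exists x0, x0 \in e.
    apply/set0Pn; rewrite -card_gt0 ce -(uX a aX) card_gt0; apply/set0Pn; by exists y.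
  apply/imsetP; exists (nth x0 sE (index y sA)).
    by rewrite -mem_enum mem_nth.
  rewrite ffunE -mem_enum -/sE mem_nth // index_uniq ?enum_uniq // nth_index //.
  by rewrite mem_enum.
apply/imsetP; exists f => //.
rewrite inE; apply/and3P; split.
- apply/forallP => x; apply/implyP => xe; apply/forallP => y; apply/implyP => ye.
  rewrite !ffunE xe ye; apply/implyP => /eqP.
  move/eqP; rewrite nth_uniq ?szA -?szE ?index_mem ?mem_enum ?enum_uniq // => /eqP h.
  by rewrite -(nth_index x (x:=x) (s:=sE)) ?mem_enum // h nth_index // mem_enum.
- by apply/forallP => e'; apply/implyP; rewrite in_set1 => /eqP ->; rewrite fe.
- by apply/forallP => x; apply/implyP => xe; rewrite ffunE (negbTE xe).
Qed.

Lemma FsetP (T V : finType) (v0 : V) (X : {set {set V}}) (S : {set T})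
  (E : {set {set T}}) (f : {ffun T -> V}) :
  f \in Fset v0 X S E <-> [/\ {in S &, injective f}, (forall e, e \in E -> f @: e \in X)
                            & (forall x, x \notin S -> f x = v0)].
Proof.
rewrite inE; split.
  case/and3P => /forallP h1 /forallP h2 /forallP h3; split.
  - move=> x y xS yS fxy; move: (h1 x); rewrite xS /= => /forallP/(_ y).
    by rewrite yS fxy eqxx /= => /eqP.
  - by move=> e eE; move: (h2 e); rewrite eE.
  - by move=> x xS; move: (h3 x); rewrite xS => /eqP.
case=> h1 h2 h3; apply/and3P; split.
- apply/forallP => x; apply/implyP => xS; apply/forallP => y; apply/implyP => yS.
  by apply/implyP => /eqP /h1 -> //.
- by apply/forallP => e; apply/implyP => /h2.
- by apply/forallP => x; apply/implyP => /h3 ->.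
Qed.

Lemma step_count (T V : finType) (v0 : V) (k d : nat) (X : {set {set V}})
  (S : {set T}) (E : {set {set T}}) (f g : {set T}) (v : T) :
  0 < k -> goodb d X ->
  (forall e, e \in E -> e \subset S /\ #|e| = k) ->
  f \in E -> g \subset f -> #|g| = k.-1 -> v \notin S ->
  #|Fset v0 X S E| * (d - #|T|) <= #|Fset v0 X (v |: S) ((v |: g) |: E)|.
Proof.
move=> k0 gX inv fE gf cg vS.
have [fS cf] := inv f fE.
have gS : g \subset S := subset_trans gf fS.
have vg : v \notin g by apply: contra vS; apply: (subsetP gS).
have [u ug fu] : exists2 u, u \notin g & f = u |: g.
  by apply: add1_set => //; rewrite cf cg prednK.
have uS : u \in S by apply: (subsetP fS); rewrite fu setU11.
set F := Fset v0 X S E.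
pose W (phi : {ffun T -> V}) := [set w | (w |: (phi @: g) \in X) && (w \notin phi @: S)].
have hW : forall phi, phi \in F -> d - #|T| <= #|W phi|.
  move=> phi /FsetP[inj ed _].
  have fX := ed f fE.
  have e1 : (phi @: f) :\ phi u = phi @: g.
    rewrite fu imsetU1 setU1K //; apply/negP => /imsetP[x xg ex].
    by move: ug; rewrite (inj u x uS (subsetP gS x xg) ex) xg.
  have := gX; move/forallP/(_ (phi @: f)); rewrite fX /= => /forallP/(_ (phi u)).
  rewrite (imset_f phi (_ : u \in f)) ?fu ?setU11 //= -fu e1 => hd.
  set A := [set w | w |: (phi @: g) \in X] in hd.
  have hsub : A :\: (phi @: S) \subset W phi.
    by apply/subsetP => w; rewrite !inE => /andP[-> ->].
  have := cardsID (phi @: S) A.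
  have c1 : #|A :&: (phi @: S)| <= #|T|.
    apply: leq_trans (subset_leq_card (subsetIr _ _)) _.
    by apply: leq_trans (leq_imset_card _ _) (max_card _).
  move=> h2; have h1 := subset_leq_card hsub.
  rewrite leq_subLR; apply: leq_trans hd _; rewrite -h2; exact: leq_add c1 h1.
pose h (p : {ffun T -> V} * V) := [ffun x => if x == v then p.2 else p.1 x].
set P := [set p : {ffun T -> V} * V | (p.1 \in F) && (p.2 \in W p.1)].
have memP : forall p, (p \in P) = (p.1 \in F) && (p.2 \in W p.1).
  by move=> p; rewrite /P inE.
have cP : #|F| * (d - #|T|) <= #|P|.
  rewrite -sum_nat_const.
  apply: (@leq_trans (\sum_(i in F) #|W i|)); first by apply: leq_sum => i; apply: hW.
  rewrite (eq_bigr (fun phi => \sum_(w in W phi) 1)); last by move=> i _; rewrite sum1_card.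
  rewrite pair_big_dep -sum1_card; apply: eq_leq; apply: eq_bigl => p. by rewrite /P inE.
apply: leq_trans cP _.
have hinj : {in P &, injective h}.
  move=> p1 p2; rewrite !memP => /andP[/FsetP[_ _ o1] _] /andP[/FsetP[_ _ o2] _] eh.
  have e2 : p1.2 = p2.2 by have := congr1 (fun q : {ffun T -> V} => q v) eh; rewrite !ffunE eqxx.
  case: p1 p2 eh e2 o1 o2 => [p1 w1] [p2 w2] /= eh e2 o1 o2; congr pair => //.
  apply/ffunP => x; case: (eqVneq x v) => [-> | xv]; first by rewrite o1 ?o2.
  by have := congr1 (fun q : {ffun T -> V} => q x) eh; rewrite !ffunE (negbTE xv).
rewrite -(card_in_imset hinj); apply: subset_leq_card; apply/subsetP => q /imsetP[[phi w]].
rewrite memP /= => /andP[/FsetP[inj ed out] wW] ->.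
move: wW; rewrite inE => /andP[wX wS].
have hv : h (phi, w) v = w by rewrite ffunE eqxx.
have hx : forall x, x != v -> h (phi, w) x = phi x by move=> x xv; rewrite ffunE (negbTE xv).
apply/FsetP; split.
- move=> x y; rewrite !in_setU1.
  case: (eqVneq x v) => [-> | xv]; case: (eqVneq y v) => [-> | yv] //= xS yS.
  + rewrite hv hx // => ewy; by move: wS; rewrite ewy imset_f.
  + rewrite hv hx // => ewy; by move: wS; rewrite -ewy imset_f.
  + by rewrite !hx //; apply: inj.
- move=> e; rewrite in_setU1 => /orP[/eqP -> | eE].
    rewrite imsetU1 hv; suff -> : [set h (phi, w) x | x in g] = phi @: g by [].
    apply: eq_in_imset => x xg; apply: hx; apply: contraNneq vg => <-; exact: xg.
  have [eS _] := inv e eE.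
  rewrite (eq_in_imset (g := phi)) ?ed // => x xe; apply: hx.
  by apply: contraNneq vS => <-; apply: (subsetP eS).
- move=> x; rewrite in_setU1 negb_or => /andP[xv xS]; by rewrite hx // out.
Qed.

Lemma tree_count (T V : finType) (v0 : V) (k d : nat) (X : {set {set V}})
  (S : {set T}) (E : {set {set T}}) :
  0 < k -> uniform k X -> goodb d X -> htree_on k S E ->
  #|X| * (d - #|T|) ^ (#|E|.-1) <= #|Fset v0 X S E|.
Proof.
move=> k0 uX gX; elim => {S E} [e ce | S E f g v hS IH fE gf cg vS].
  by rewrite cards1 expn0 muln1; apply: base_count ce.
have [inv _] := htree_inv k0 hS.
have [fS _] := inv f fE.
have nE : v |: g \notin E.
  apply/negP => /inv [/subsetP h _]; by move: vS; rewrite h // setU11.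
have E0 : 0 < #|E| by apply/card_gt0P; exists f.
rewrite cardsU1 nE add1n /=.
apply: leq_trans (step_count v0 k0 gX inv fE gf cg vS).
rewrite -(prednK E0) expnS mulnCA mulnC leq_mul2r IH orbT //.
Qed.

Lemma inj_count (T V : finType) (v0 : V) (k d : nat) (X EX : {set {set V}})
  (EH : {set {set T}}) :
  0 < k -> uniform k X -> goodb d X -> is_hypertree k EH -> X \subset EX ->
  #|X| * (d - #|T|) ^ (#|EH|.-1) <= #|Inj EH EX|.
Proof.
move=> k0 uX gX hH sX.
apply: leq_trans (tree_count v0 k0 uX gX hH) _.
apply: subset_leq_card; apply/subsetP => f /FsetP[inj ed _].
rewrite inE; apply/andP; split.
  by apply/injectiveP => x y; apply: inj; rewrite inE.
by apply/forallP => e; apply/implyP => eE; apply: (subsetP sX); apply: ed.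
Qed.

Lemma cov_bound (V : finType) (k : nat) (X : {set {set V}}) :
  uniform k X -> #|cov X| <= #|V| ^ k.-1.
Proof.
move=> uX; apply: leq_trans (bin_le_exp _ _); rewrite -card_draws.
apply: subset_leq_card; apply/subsetP => z /imset2P[a y aX ya ->].
by rewrite inE; move: (cardsD1 y a); rewrite ya (uX a aX) add1n => ->.
Qed.

Lemma htree_E0 (T : finType) (k : nat) (S : {set T}) (E : {set {set T}}) :
  htree_on k S E -> 0 < #|E|.
Proof.
case => [e _ | S' E' f g v _ _ _ _ _]; first by rewrite cards1.
by apply/card_gt0P; exists (v |: g); rewrite setU11.
Qed.

Delimit Scope R_scope with R.
Section RealPart.
Local Open Scope R_scope.


Lemma Rpower_pos x y : 0 < Rpower x y.
Proof. unfold Rpower; apply exp_pos. Qed.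

Lemma nat_floor x : 0 <= x -> exists m : nat, INR m <= x < INR m + 1.
Proof.
intros hx; destruct (archimed x) as [h1 h2].
assert (hz : (0 < up x)%Z) by (apply lt_IZR; lra).
exists (Z.to_nat (up x - 1)).
rewrite INR_IZR_INZ Znat.Z2Nat.id; last by lia.
rewrite minus_IZR; clear hz; split; lra.
Qed.

Lemma INR_expn m k : INR (m ^ k)%N = INR m ^ k.
Proof.
elim: k => [|k IH]; first by rewrite expn0.
by rewrite expnS mult_INR IH /=.
Qed.

Lemma large_pow b M : 0 < b -> 0 < M ->
  exists N : nat, (0 < N)%N /\ forall n : nat, (N <= n)%N -> M <= Rpower (INR n) b.
Proof.
intros hb hM.
destruct (@nat_floor (Rpower M (/ b))) as [m [hm1 hm2]]; first by left; apply Rpower_pos.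
exists (m.+1); split; first by [].
intros n hn.
have hn' : INR m + 1 <= INR n.
  by rewrite -S_INR; apply le_INR; apply/leP.
have -> : M = Rpower (Rpower M (/ b)) b.
  rewrite Rpower_mult Rinv_l ?Rpower_1 //; lra.
apply Rle_Rpower_l; first by lra.
split; [apply Rpower_pos | lra].
Qed.

End RealPart.

Theorem lemma8 (k : nat) (r : R) (T : finType) (EH : {set {set T}}) :
  (2 <= k)%N -> (0 <= r < 1)%R -> is_hypertree k EH ->
  exists c : R, (0 < c)%R /\
  exists N : nat, forall n : nat, (N <= n)%N ->
    forall EX : {set {set 'I_n}}, uniform k EX ->
      (Rpower (INR n) (INR k - r) <= INR #|EX|)%R ->
      (c * Rpower (INR n) (INR #|T| - INR #|EH| * r) <= INR #|Inj EH EX|)%R.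
Proof.
move=> k2 [r0 r1] hH.
have k0 : (0 < k)%N by apply: leq_trans k2.
have [_ hc] := htree_inv k0 hH; rewrite cardsT in hc.
have e0 : (0 < #|EH|)%N := htree_E0 hH.
set t := #|T| in hc *; set e := #|EH| in hc e0 *.
have [N [N0 hN]] := @large_pow (1 - r) (4 * (INR t + 1)) ltac:(lra)
  ltac:(have := pos_INR t; lra).
exists ((/2) * (/4) ^ e.-1)%R; split.
  apply Rmult_lt_0_compat; [lra | apply pow_lt; lra].
exists N => n hn EX uX hEX.
have n0 : (0 < n)%N := leq_trans N0 hn.
have npos : (0 < INR n)%R by apply lt_0_INR; apply/ltP.
have hq := hN n hn; set q := Rpower (INR n) (1 - r) in hq.
have ht := pos_INR t.
have [dl [hd1 hd2]] := @nat_floor (q / 2) ltac:(lra).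
have [X' [sX gX cX]] := deletion dl k0 uX.
have uX' : uniform k X' by move=> a /(subsetP sX) /uX.
have cb := cov_bound uX; rewrite card_ord in cb.
have ic := inj_count (Ordinal n0) k0 uX' gX hH sX.
have nat1 : (#|EX| <= #|X'| + dl * n ^ k.-1)%N.
  by apply: leq_trans cX _; rewrite leq_add2l leq_mul2l cb orbT.
have r1' : (INR #|EX| <= INR #|X'| + INR dl * INR n ^ k.-1)%R.
  by rewrite -INR_expn -mult_INR -plus_INR; apply le_INR; apply/leP.
set A := (INR n ^ k.-1)%R in r1'.
have Apos : (0 < A)%R by apply pow_lt.
have hP : Rpower (INR n) (INR k - r) = (q * A)%R.
  rewrite /q /A -Rpower_pow // -Rpower_plus; congr Rpower.
  rewrite -{1}(prednK k0) S_INR; ring.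
have hX' : (q * A / 2 <= INR #|X'|)%R.
  have : (INR dl * A <= q / 2 * A)%R by apply Rmult_le_compat_r; lra.
  rewrite hP in hEX; lra.
have tdl : (t < dl)%N by apply/ltP; apply INR_lt; lra.
have hdt : (q / 4 <= INR (dl - t))%R.
  rewrite minus_INR; [lra | apply/leP; exact: ltnW tdl].
have ic' : (INR #|X'| * INR (dl - t) ^ e.-1 <= INR #|Inj EH EX|)%R.
  by rewrite -INR_expn -mult_INR; apply le_INR; apply/leP.
have hce : (INR t = INR k - r + (1 - r) * INR e.-1 + INR e * r)%R.
  have h1 : (INR t + 1 = INR k + INR e)%R by have := congr1 INR hc; rewrite -!plusE !plus_INR /=; lra.
  have h2 : INR e = (INR e.-1 + 1)%R by rewrite -S_INR prednK.
  rewrite h2 in h1 *; nra.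
have hexp : Rpower (INR n) (INR t - INR e * r) = (q * A * q ^ e.-1)%R.
  rewrite -hP -Rpower_pow /q ?Rpower_mult -?Rpower_plus; last by apply Rpower_pos.
  congr Rpower; lra.
rewrite hexp; apply: Rle_trans ic'.
have hpw : ((q / 4) ^ e.-1 <= INR (dl - t) ^ e.-1)%R by apply pow_incr; lra.
have -> : (/ 2 * (/ 4) ^ e.-1 * (q * A * q ^ e.-1) = (q * A / 2) * (q / 4) ^ e.-1)%R.
  rewrite /Rdiv Rpow_mult_distr; ring.
apply Rmult_le_compat => //.
- apply Rmult_le_pos; [apply Rmult_le_pos | ]; lra.
- apply pow_le; lra.
Qed.
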